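(* Let $\mathbf{P}$ be a finite poset with a metric $d_{\mathbf{P}}$ and let $\sigma:\mathbf{P}\to\mathbf{P}$ be a monotone map with $x\le\sigma(x)$ for all $x\in\mathbf{P}$. On $\hat{\mathbf{Q}}=\mathbf{P}\times\{0,1\}$ define $(x,i)\le(y,j)$ iff $\sigma(x)\le y$ when $i\neq j$, and iff $x\le y$ when $i=j$. Write $x_L=(x,0)$, $x_R=(x,1)$. Then: (1) this relation is a preorder on $\hat{\mathbf{Q}}$; (2) for the associated equivalence relation $\sim$ ($u\sim v$ iff $u\le v$ and $v\le u$), the class of $(x,i)$ is $\{x_L,x_R\}$ if $\sigma(x)=x$ and $\{(x,i)\}$ otherwise; let $\mathbf{Q}=\hat{\mathbf{Q}}/\!\sim$ be the quotient poset with classes $[u]$; (3) the maps $g:\mathbf{P}\to\mathbf{Q}$, $g(x)=[x_L]$, and $f:\mathbf{Q}\to\mathbf{P}$, $f([x_L])=x$, $f([x_R])=\sigma(x)$, are well defined and form a Galois insertion $f:\mathbf{Q}\rightleftarrows\mathbf{P}:g$; (4) similarly $i:\mathbf{P}\to\mathbf{Q}$, $i(x)=[x_R]$, and $h:\mathbf{Q}\to\mathbf{P}$, $h([x_L])=\sigma(x)$, $h([x_R])=x$, form a Galois insertion $h:\mathbf{Q}\rightleftarrows\mathbf{P}:i$; (5) for $\mathbf{P}$-modules $M,N$, if $\Gamma$ is a $\mathbf{Q}$-module with $g^*\Gamma\cong M$ and $i^*\Gamma\cong N$, then $(\mathbf{Q},f\dashv g,h\dashv i,\Gamma)$ is a Galois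 coupling of $(M,N)$ with $\mathrm{cost}(\Gamma)=\sup_{x\in\mathbf{P}}d_{\mathbf{P}}(x,\sigma(x))$; in particular, if $M=N\circ\sigma$, then $\Gamma:=h^*N=N\circ h$ gives such a Galois coupling.
   Context: Fix a field $k$; $\mathrm{vect}$ is the category of finite-dimensional $k$-vector spaces. Finite posets are categories with a unique morphism $x\to y$ iff $x\le y$; a $\mathbf{P}$-module is a functor $\mathbf{P}\to\mathrm{vect}$; for a monotone map $g$, $g^*$ is precomposition with $g$. A Galois insertion $f:\mathbf{Q}\rightleftarrows\mathbf{P}:g$ consists of monotone maps $f:\mathbf{Q}\to\mathbf{P}$, $g:\mathbf{P}\to\mathbf{Q}$ with $f(u)\le x\iff u\le g(x)$ for all $u,x$, and $f\circ g=\mathrm{id}_{\mathbf{P}}$. A Galois coupling of $(M,N)$ is $(\mathbf{Q},f\dashv g,h\dashv i,\Gamma)$ with $\mathbf{Q}$ a finite poset, $f:\mathbf{Q}\rightleftarrows\mathbf{P}:g$ and $h:\mathbf{Q}\rightleftarrows\mathbf{P}:i$ Galois insertions, and a $\mathbf{Q}$-module $\Gamma$ with $g^*\Gamma\cong M$, $i^*\Gamma\cong N$; its cost is $\mathrm{cost}(\Gamma)=\sup_{q\in\mathbf{Q}}d_{\mathbf{P}}(f(q),h(q))$. *)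

(* Defs.v *)
From HB Require Import structures.
From mathcomp Require Import all_boot all_order all_algebra.
Set Implicit Arguments. Unset Strict Implicit. Unset Printing Implicit Defensive.
Import Order.TTheory GRing.Theory Num.Theory.
Local Open Scope ring_scope.

Definition is_poset (T : finType) (le : rel T) : Prop :=
  [/\ reflexive le, antisymmetric le & transitive le].

Definition monotone (S T : finType) (leS : rel S) (leT : rel T) (f : S -> T) :=
  forall x y, leS x y -> leT (f x) (f y).

Definition galois_insertion (Q P : finType) (leQ : rel Q) (leP : rel P)
  (f : Q -> P) (g : P -> Q) : Prop :=
  [/\ monotone leQ leP f, monotone leP leQ g,
      (forall u x, leP (f u) x = leQ u (g x)) & (forall x, f (g x) = x)].

(* ---------- modules: functors (T,le) -> vect_k, in matrix form ------
   a vector space at x is k^(dim x) (row vectors); the structure map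
   x -> y (for x <= y) is the matrix mor x y (acting on the right). *)
Record pmod (k : fieldType) (T : finType) := PMod {
  pdim : T -> nat;
  pmor : forall x y : T, 'M[k]_(pdim x, pdim y) }.

Definition is_module (k : fieldType) (T : finType) (le : rel T) (M : pmod k T) :=
  (forall x, pmor M x x = 1%:M) /\
  (forall x y z, le x y -> le y z -> pmor M x y *m pmor M y z = pmor M x z).

Definition mod_iso (k : fieldType) (T : finType) (le : rel T) (M N : pmod k T) :=
  exists (phi : forall x, 'M[k]_(pdim M x, pdim N x))
         (psi : forall x, 'M[k]_(pdim N x, pdim M x)),
    (forall x, phi x *m psi x = 1%:M /\ psi x *m phi x = 1%:M) /\
    (forall x y, le x y -> pmor M x y *m phi y = phi x *m pmor N x y).

Definition pullback (k : fieldType) (T S : finType) (g : T -> S) (M : pmod k S)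
  : pmod k T := @PMod k T (fun x => pdim M (g x)) (fun x y => pmor M (g x) (g y)).

Definition is_metric (R : realFieldType) (T : Type) (d : T -> T -> R) :=
  [/\ forall x y, d x y = 0 <-> x = y, forall x y, d x y = d y x
    & forall x y z, d x z <= d x y + d y z].

Definition galois_coupling (k : fieldType) (d0 : Order.disp_t)
  (P : finPOrderType d0) (M N : pmod k P) (Q : finType) (leQ : rel Q)
  (f g' : _) (h i' : _) (Gam : pmod k Q) : Prop :=
  [/\ is_poset leQ, @galois_insertion Q P leQ <=%O f g',
      @galois_insertion Q P leQ <=%O h i', is_module leQ Gam &
      mod_iso <=%O (pullback g' Gam) M /\ mod_iso <=%O (pullback i' Gam) N].

(* cost = sup_q d(f q, h q)  (distances are >= 0, so 0 is a neutral start) *)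
Definition coupling_cost (R : realFieldType) (Q P : finType) (d : P -> P -> R)
  (f h : Q -> P) : R := \big[Num.max/0]_(q : Q) d (f q) (h q).

Section Construction.
Context {d0 : Order.disp_t} (P : finPOrderType d0) (sigma : P -> P).

Definition Qhat := (P * bool)%type.   (* false = L, true = R *)

Definition hle (u v : Qhat) : bool :=
  if u.2 == v.2 then (u.1 <= v.1)%O else (sigma u.1 <= v.1)%O.

Definition hequiv (u v : Qhat) : bool := hle u v && hle v u.

Definition hclass (u : Qhat) : {set Qhat} := [set v | hequiv u v].

Definition Qt := {S : {set Qhat} | [exists u, S == hclass u]}.

Lemma qclass_proof (u : Qhat) : [exists v, hclass u == hclass v].
Proof. by apply/existsP; exists u. Qed.

Definition qclass (u : Qhat) : Qt := exist _ (hclass u) (qclass_proof u).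

Definition Qle (S T : Qt) : bool :=
  [exists u in val S, exists v in val T, hle u v].

Definition gQ (x : P) : Qt := qclass (x, false).
Definition iQ (x : P) : Qt := qclass (x, true).
Definition fhat (u : Qhat) : P := if u.2 then sigma u.1 else u.1.
Definition hhat (u : Qhat) : P := if u.2 then u.1 else sigma u.1.

End Construction.

(* Main.v *)
Require Import Defs.
From mathcomp Require Import all_boot all_order all_algebra.
Import Order.TTheory GRing.Theory Num.Theory.
Local Open Scope ring_scope.

Section Aux.
Context {d0 : Order.disp_t} (P : finPOrderType d0) (sigma : P -> P).
Hypothesis smono : {homo sigma : x y / (x <= y)%O}.
Hypothesis sext : forall x, (x <= sigma x)%O.

Lemma hle_refl : reflexive (hle sigma).
Proof. by move=> [x b]; rewrite /hle eqxx lexx. Qed.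

Lemma hle_trans : transitive (hle sigma).
Proof.
move=> [b j] [a i] [c l]; rewrite /hle /=.
case: i; case: j; case: l => /= h1 h2.
all: try exact: le_trans h1 h2.
all: try (apply: le_trans h2; exact: smono h1).
all: try exact: le_trans h1 h2.
all: apply: le_trans (sext a) _; apply: le_trans h1 _; exact: le_trans (sext b) h2.
Qed.

Lemma hequivP a i b j : hequiv sigma (a, i) (b, j) ->
  a = b /\ (i = j \/ sigma a = a).
Proof.
rewrite /hequiv /hle /=; case: (i =P j) => [->|nij]; rewrite ?eqxx.
  by move=> /andP[ab ba]; split; [apply/le_anti; rewrite ab ba | left].
have -> : (j == i) = false by apply/eqP => E; apply: nij.
move=> /andP[sab sba].
have ab : (a <= b)%O := le_trans (sext a) sab.
have ba : (b <= a)%O := le_trans (sext b) sba.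
have eab : a = b by apply/le_anti; rewrite ab ba.
split=> //; right; apply/le_anti; rewrite sext andbT.
by rewrite -eab in sab.
Qed.

Lemma hequiv_sym u v : hequiv sigma u v = hequiv sigma v u.
Proof. by rewrite /hequiv andbC. Qed.

Lemma hequiv_trans u v w : hequiv sigma u v -> hequiv sigma v w -> hequiv sigma u w.
Proof.
move=> /andP[uv vu] /andP[vw wv]; apply/andP; split; [exact: hle_trans uv vw | exact: hle_trans wv vu].
Qed.

Lemma hclass_eq u v : hequiv sigma u v -> hclass sigma u = hclass sigma v.
Proof.
move=> uv; apply/setP => w; rewrite !inE; apply/idP/idP => H.
  by apply: hequiv_trans H; rewrite hequiv_sym.
exact: hequiv_trans H.
Qed.

Lemma qclass_eq u v : hequiv sigma u v -> qclass sigma u = qclass sigma v.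
Proof. by move=> uv; apply: val_inj; apply: hclass_eq. Qed.

Lemma hequiv_refl u : hequiv sigma u u.
Proof. by rewrite /hequiv hle_refl. Qed.

Lemma qclass_eqE u v : qclass sigma u = qclass sigma v -> hequiv sigma u v.
Proof.
move=> /(congr1 val) /= E.
have : v \in hclass sigma v by rewrite inE hequiv_refl.
by rewrite -E inE.
Qed.

Definition rep (S : Qt sigma) : Qhat P := xchoose (existsP (valP S)).

Lemma repK S : S = qclass sigma (rep S).
Proof. by apply: val_inj => /=; apply/eqP; exact: (xchooseP (existsP (valP S))). Qed.

Lemma rep_qclass u : hequiv sigma u (rep (qclass sigma u)).
Proof. by apply: qclass_eqE; rewrite -repK. Qed.

Lemma Qle_qclass u v : Qle (qclass sigma u) (qclass sigma v) = hle sigma u v.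
Proof.
apply/idP/idP.
  move=> /existsP[u' /andP[]]; rewrite /= inE => /andP[uu' _].
  move=> /existsP[v' /andP[]]; rewrite /= inE => /andP[_ v'v] h.
  exact: hle_trans _ _ _ (hle_trans _ _ _ uu' h) v'v.
move=> h; apply/existsP; exists u; rewrite /= inE hequiv_refl /=.
by apply/existsP; exists v; rewrite /= inE hequiv_refl.
Qed.

Definition fQ (S : Qt sigma) : P := fhat sigma (rep S).
Definition hQ (S : Qt sigma) : P := hhat sigma (rep S).

Lemma fhat_eq u v : hequiv sigma u v -> fhat sigma u = fhat sigma v.
Proof.
case: u v => a i [b j] /hequivP [<- [<-|sa]] //.
by rewrite /fhat /=; case: i j => [] [] //=.
Qed.

Lemma hhat_eq u v : hequiv sigma u v -> hhat sigma u = hhat sigma v.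
Proof.
case: u v => a i [b j] /hequivP [<- [<-|sa]] //.
by rewrite /hhat /=; case: i j => [] [] //=.
Qed.

Lemma fQE u : fQ (qclass sigma u) = fhat sigma u.
Proof. by rewrite /fQ; symmetry; apply: fhat_eq; apply: rep_qclass. Qed.

Lemma hQE u : hQ (qclass sigma u) = hhat sigma u.
Proof. by rewrite /hQ; symmetry; apply: hhat_eq; apply: rep_qclass. Qed.

Lemma Qle_poset : is_poset (Qle (sigma:=sigma)).
Proof.
split.
- by move=> S; rewrite (repK S) Qle_qclass hle_refl.
- move=> S T; rewrite (repK S) (repK T) !Qle_qclass => H.
  by apply: qclass_eq; exact: H.
- move=> S T U; rewrite (repK S) (repK T) (repK U) !Qle_qclass.
  exact: hle_trans.
Qed.

Lemma gi_f : galois_insertion (Qle (sigma:=sigma)) <=%O fQ (gQ sigma).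
Proof.
split.
- move=> S T; rewrite (repK S) (repK T) Qle_qclass !fQE.
  case: (rep S) (rep T) => a i [b j]; rewrite /hle /fhat /=.
  case: i; case: j => //= h.
  all: try first [exact: smono h | exact: le_trans (sext a) (le_trans h (sext b))
    | exact: le_trans h (sext b) | exact: le_trans (sext a) h].
- by move=> x y h; rewrite /gQ Qle_qclass /hle eqxx.
- move=> S x; rewrite (repK S) /gQ Qle_qclass fQE.
  by case: (rep S) => a [] //.
- by move=> x; rewrite /gQ fQE.
Qed.

Lemma gi_h : galois_insertion (Qle (sigma:=sigma)) <=%O hQ (iQ sigma).
Proof.
split.
- move=> S T; rewrite (repK S) (repK T) Qle_qclass !hQE.
  case: (rep S) (rep T) => a i [b j]; rewrite /hle /hhat /=.
  case: i; case: j => //= h.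
  all: try first [exact: smono h | exact: le_trans (sext a) (le_trans h (sext b))
    | exact: le_trans h (sext b) | exact: le_trans (sext a) h].
- by move=> x y h; rewrite /iQ Qle_qclass /hle eqxx.
- move=> S x; rewrite (repK S) /iQ Qle_qclass hQE.
  by case: (rep S) => a [] //.
- by move=> x; rewrite /iQ hQE.
Qed.

Lemma hclassE x b : hclass sigma (x, b) =
  if sigma x == x then [set (x, false); (x, true)] else [set (x, b)].
Proof.
apply/setP => -[y j]; rewrite inE.
case: (boolP (hequiv sigma (x, b) (y, j))) => H.
- have [<- [<-|sx]] := @hequivP _ _ _ _ H.
  + case: ifP => _; rewrite !inE ?eqxx //; by case: b {H}; rewrite !xpair_eqE eqxx ?orbT.
  + rewrite sx eqxx !inE; by case: j {H}; rewrite !xpair_eqE eqxx ?orbT.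
- apply/esym/negP => Hin; move/negP: H; apply; move: Hin; case: ifP => sx; rewrite !inE.
  + move/eqP: sx => sx.
    by move=> /orP[] /eqP [-> ->]; rewrite /hequiv /hle; case: ifP => _; case: ifP => _; rewrite ?sx lexx.
  + move=> /eqP [-> ->]; exact: hequiv_refl.
Qed.

Lemma cost_eq (R : realFieldType) (dP : P -> P -> R) : is_metric dP ->
  coupling_cost dP fQ hQ = \big[Num.max/0]_(x : P) dP x (sigma x).
Proof.
move=> [_ dsym _].
have term q : dP (fQ q) (hQ q) = dP (rep q).1 (sigma (rep q).1).
  by rewrite /fQ /hQ; case: (rep q) => a [] //; exact: dsym.
have ge0 (I : finType) (F : I -> R) : 0 <= \big[Num.max/0]_(i : I) F i.
  by rewrite bigmax_idl le_max lexx.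
rewrite /coupling_cost; apply/le_anti/andP; split.
  apply: bigmax_le; first exact: ge0.
  by move=> q _; rewrite term; exact: le_bigmax.
apply: bigmax_le; first exact: ge0.
move=> x _; have := le_bigmax 0 (fun q => dP (fQ q) (hQ q)) (gQ sigma x).
by rewrite /gQ fQE hQE.
Qed.

End Aux.

Lemma mod_iso_eq (k : fieldType) d0 (P : finPOrderType d0) (T : finType)
  (leT : rel T) (N : pmod k P) (a b : T -> P) :
  is_module <=%O N -> (forall x, a x = b x) ->
  (forall x y, leT x y -> (a x <= a y)%O) ->
  mod_iso leT (pullback a N) (pullback b N).
Proof.
move=> [N1 N2] eab mon.
exists (fun x => pmor N (a x) (b x)), (fun x => pmor N (b x) (a x)); split.
  move=> x /=; split.
    by rewrite N2 ?N1 // eab.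
  by rewrite N2 ?N1 // eab.
move=> x y lxy /=.
have axy := mon x y lxy.
have bxy : (b x <= b y)%O by rewrite -!eab.
rewrite !N2 //; by rewrite ?eab // -?eab.
Qed.
Theorem proposition3p10 (k : fieldType) (R : realFieldType)
  (d0 : Order.disp_t) (P : finPOrderType d0) (dP : P -> P -> R)
  (sigma : P -> P) :
  is_metric dP ->
  {homo sigma : x y / (x <= y)%O} ->
  (forall x, (x <= sigma x)%O) ->
  [/\ (* (1) preorder *)
      reflexive (hle sigma) /\ transitive (hle sigma),
      (* (2) equivalence classes, and Q is a poset with the induced order *)
      (forall (x : P) (b : bool),
          hclass sigma (x, b) =
          if sigma x == x then [set (x, false); (x, true)] else [set (x, b)]),
      is_poset (Qle (sigma:=sigma)) /\
        (forall u v, Qle (qclass sigma u) (qclass sigma v) = hle sigma u v) &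
      (* (3)-(5) *)
      exists (f h : Qt sigma -> P),
        [/\ (forall u, f (qclass sigma u) = fhat sigma u) /\
              (forall u, h (qclass sigma u) = hhat sigma u),
            galois_insertion (Qle (sigma:=sigma)) <=%O f (gQ sigma),
            galois_insertion (Qle (sigma:=sigma)) <=%O h (iQ sigma),
            (forall (M N : pmod k P) (Gam : pmod k (Qt sigma)),
                is_module <=%O M -> is_module <=%O N ->
                is_module (Qle (sigma:=sigma)) Gam ->
                mod_iso <=%O (pullback (gQ sigma) Gam) M ->
                mod_iso <=%O (pullback (iQ sigma) Gam) N ->
                galois_coupling M N (Qle (sigma:=sigma)) f (gQ sigma) h (iQ sigma) Gam /\
                coupling_cost dP f h = \big[Num.max/0]_(x : P) dP x (sigma x))
          & (forall N : pmod k P, is_module <=%O N ->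
                galois_coupling (pullback sigma N) N (Qle (sigma:=sigma))
                   f (gQ sigma) h (iQ sigma) (pullback h N) /\
                coupling_cost dP f h = \big[Num.max/0]_(x : P) dP x (sigma x))]].
Proof.
move=> dm smono sext.
have gf := gi_f P sigma smono sext; have gh := gi_h P sigma smono sext.
have Qp := Qle_poset P sigma smono sext.
have ce := cost_eq P sigma sext R dP dm.
have hQE' := hQE P sigma sext.
split.
- by split; [exact: hle_refl | exact: hle_trans P sigma smono sext].
- exact: hclassE P sigma sext.
- by split; [exact: Qp | exact: Qle_qclass P sigma smono sext].
exists (fQ P sigma), (hQ P sigma); split.
- by split; [exact: fQE P sigma sext | exact: hQE'].
- exact: gf.
- exact: gh.
- move=> M N Gam _ _ Gm i1 i2; split; last exact: ce.
  by split.
- move=> N [N1 N2]; split; last exact: ce.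
  have [hmon _ _ hiK] := gh.
  split.
  + exact: Qp.
  + exact: gf.
  + exact: gh.
  + split=> [x|x y z lxy lyz] /=; first exact: N1.
    by apply: N2; apply: hmon.
  + split.
    * apply: (@mod_iso_eq k d0 P _ _ N (fun x => hQ P sigma (gQ sigma x)) sigma) => //.
      - by move=> x; rewrite /gQ hQE'.
      - by move=> x y lxy; rewrite /gQ !hQE' /hhat /=; exact: smono.
    * have := (@mod_iso_eq k d0 P _ <=%O N (fun x => hQ P sigma (iQ sigma x)) id (conj N1 N2)).
      apply => //.
      all: move=> x; try move=> y lxy; by rewrite /iQ !hQE'.
Qed.
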